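(* Let $a<b$, $k>0$, $\lambda\in(0,\pi/2]$, $f\in C^3([a,b])$, and put $\mu_1=\sup_{t\in[a,b]}|f''(t)|$, $\mu_2=\sup_{t\in[a,b]}|f'''(t)|$. Let $\epsilon\in J_n$ for some $n\ge0$, and let $y_\epsilon$ be the solution of $\epsilon y''+ky=f(t)$ on $[a,b]$, $y'(a)=y'(b)=0$. Then for every $t_0\in[a,b]$, $$\Big|y_\epsilon(t_0)-\frac{f(t_0)}{k}\Big|\le\frac{1}{k\sin\lambda}\sqrt{\frac{\epsilon}{k}}\Big\{|f'(a)|+|f'(b)|+\sqrt{\frac{\epsilon}{k}}\big(|f''(a)|+\mu_2(b-a)\big)\Big\}+\frac1k\sqrt{\frac{\epsilon}{k}}\Big\{|f'(a)|+\sqrt{\frac{\epsilon}{k}}\big(\mu_1+|f''(a)|+\mu_2(b-a)\big)\Big\}.$$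
   Context: For a fixed constant $\lambda\in(0,\pi/2]$ and $n=0,1,2,\dots$ define the closed intervals $$J_n=\left[\,k\left(\frac{b-a}{(n+1)\pi-\lambda}\right)^2,\ k\left(\frac{b-a}{n\pi+\lambda}\right)^2\,\right].$$ Note that $\epsilon\in J_n$ iff $\sqrt{k/\epsilon}\,(b-a)\in[n\pi+\lambda,(n+1)\pi-\lambda]$. *)

(* Defs.v *)
From Stdlib Require Import Reals Lra.
Open Scope R_scope.

(* g' is the derivative of g on the closed interval [a,b], taken within
   [a,b] (so one-sided at the endpoints). *)
Definition deriv_on (a b : R) (g g' : R -> R) : Prop :=
  forall t, a <= t <= b ->
    limit1_in (fun x => (g x - g t) / (x - t))
              (fun x => a <= x <= b /\ x <> t) (g' t) t.

Definition cont_on (a b : R) (g : R -> R) : Prop :=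
  forall t, a <= t <= b -> limit1_in g (fun x => a <= x <= b) (g t) t.

Definition J (k a b lam : R) (n : nat) (eps : R) : Prop :=
  k * ((b - a) / ((INR n + 1) * PI - lam)) ^ 2 <= eps /\
  eps <= k * ((b - a) / (INR n * PI + lam)) ^ 2.

(* Main.v *)
Require Import Defs.
From Stdlib Require Import Reals Lra.
From Coquelicot Require Import Coquelicot.
Open Scope R_scope.


Lemma deriv_interior a b g g' c : deriv_on a b g g' -> a < c < b ->
  derivable_pt_lim g c (g' c).
Proof.
  intros H Hc eps He.
  destruct (H c ltac:(lra) eps He) as [alp [Ha Hl]].
  assert (Hp : 0 < Rmin alp (Rmin (c-a) (b-c))).
  { apply Rmin_pos; [lra| apply Rmin_pos; lra]. }
  exists (mkposreal _ Hp). intros h hn hl. simpl in hl.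
  assert (h1 := Rmin_l alp (Rmin (c-a) (b-c))).
  assert (h2 := Rmin_r alp (Rmin (c-a) (b-c))).
  assert (h3 := Rmin_l (c-a) (b-c)).
  assert (h4 := Rmin_r (c-a) (b-c)).
  assert (Hh := Rabs_def2 _ _ hl).
  specialize (Hl (c+h)). simpl in Hl. unfold R_dist in Hl.
  replace (c + h - c) with h in Hl by ring.
  apply Hl. split. split; [lra|]. lra. lra.
Qed.

Lemma deriv_cont a b g g' c : deriv_on a b g g' -> a <= c <= b ->
  limit1_in g (fun x => a <= x <= b) (g c) c.
Proof.
  intros H Hc eps He.
  destruct (H c Hc 1 ltac:(lra)) as [alp [Ha Hl]].
  set (M := Rabs (g' c) + 1).
  assert (HM : 0 < M) by (unfold M; pose proof (Rabs_pos (g' c)); lra).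
  exists (Rmin alp (eps / M)). split.
  { apply Rmin_pos; [lra| apply Rdiv_lt_0_compat; lra]. }
  intros x [Dx Hx]. simpl in *. unfold R_dist in *.
  assert (h1 := Rmin_l alp (eps/M)). assert (h2 := Rmin_r alp (eps/M)).
  destruct (Req_dec x c) as [->|Hxc].
  { replace (g c - g c) with 0 by ring. rewrite Rabs_R0. lra. }
  assert (Hd : dist R_met x c < alp) by (simpl; unfold R_dist; lra).
  specialize (Hl x (conj (conj Dx Hxc) Hd)). simpl in Hl; unfold R_dist in Hl.
  set (q := (g x - g c) / (x - c)) in Hl.
  assert (Eq : g x - g c = q * (x - c)) by (unfold q; field; lra).
  rewrite Eq, Rabs_mult.
  assert (Hq : Rabs q <= M).
  { unfold M. replace q with ((q - g' c) + g' c) by ring.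
    pose proof (Rabs_triang (q - g' c) (g' c)). lra. }
  assert (Hxc' : Rabs (x - c) < eps / M) by lra.
  assert (eps = M * (eps / M)) by (field; lra).
  pose proof (Rabs_pos q). pose proof (Rabs_pos (x-c)). nra.
Qed.

Definition clamp (a t x : R) := Rmax a (Rmin t x).

Lemma clamp_in a t x : a <= t -> a <= clamp a t x <= t.
Proof. intros; unfold clamp, Rmax, Rmin; repeat destruct Rle_dec; lra. Qed.
Lemma clamp_id a t x : a <= x <= t -> clamp a t x = x.
Proof. intros; unfold clamp, Rmax, Rmin; repeat destruct Rle_dec; lra. Qed.
Lemma clamp_lip a t x y : a <= t -> Rabs (clamp a t x - clamp a t y) <= Rabs (x - y).
Proof.
  intros; unfold clamp, Rmax, Rmin; repeat destruct Rle_dec;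
  unfold Rabs; repeat destruct Rcase_abs; lra.
Qed.

Lemma lip a b t M F F' : a < t -> t <= b ->
 (forall c, a < c < t -> derivable_pt_lim F c (F' c)) ->
 (forall c, a <= c <= b -> limit1_in F (fun x => a <= x <= b) (F c) c) ->
 (forall c, a < c < t -> Rabs (F' c) <= M) ->
 Rabs (F t - F a) <= M * (t - a).
Proof.
  intros Hat Htb HD HC HM.
  set (G := fun x => F (clamp a t x)).
  assert (HG : forall c, a < c < t -> derivable_pt_lim G c (F' c)).
  { intros c Hc eps He.
    destruct (HD c Hc eps He) as [del Hdel].
    assert (Hp : 0 < Rmin del (Rmin (c-a) (t-c))).
    { apply Rmin_pos; [apply cond_pos| apply Rmin_pos; lra]. }
    exists (mkposreal _ Hp). intros h hn hl. simpl in hl.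
    assert (h1 := Rmin_l del (Rmin (c-a) (t-c))).
    assert (h2 := Rmin_r del (Rmin (c-a) (t-c))).
    assert (h3 := Rmin_l (c-a) (t-c)).
    assert (h4 := Rmin_r (c-a) (t-c)).
    assert (Hh := Rabs_def2 _ _ hl).
    unfold G. rewrite (clamp_id a t (c+h)) by lra. rewrite (clamp_id a t c) by lra.
    apply Hdel; auto. lra. }
  assert (HGc : forall c, continuity_pt G c).
  { intros c eps He.
    assert (Hcl := clamp_in a t c ltac:(lra)).
    destruct (HC (clamp a t c) ltac:(lra) eps He) as [alp [Ha Hl]].
    exists alp. split; auto. intros x [_ Hx].
    simpl in *. unfold R_dist in *. unfold G. apply Hl.
    assert (Hxl := clamp_in a t x ltac:(lra)).
    split; [lra|]. simpl. unfold R_dist.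
    pose proof (clamp_lip a t x c ltac:(lra)). lra. }
  set (pr1 := fun c (P : a < c < t) => exist (fun l => derivable_pt_lim G c l) (F' c) (HG c P)).
  set (pr2 := fun c (_ : a < c < t) => derivable_pt_id c).
  destruct (MVT G id a t pr1 pr2 Hat (fun c _ => HGc c)
     (fun c _ => derivable_continuous_pt id c (derivable_pt_id c))) as [c [P Hc]].
  unfold pr1, pr2 in Hc. simpl in Hc.
  rewrite (derive_pt_eq_0 id c 1 (derivable_pt_id c) (derivable_pt_lim_id c)) in Hc.
  unfold G, id in Hc. rewrite (clamp_id a t t), (clamp_id a t a) in Hc by lra.
  rewrite Rmult_1_r in Hc. rewrite <- Hc.
  replace ((t - a) * F' c) with (F' c * (t - a)) by ring.
  rewrite Rabs_mult, (Rabs_right (t-a)) by lra.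
  apply Rmult_le_compat_r; [lra|]. apply HM; auto.
Qed.


Definition RR (Z Z1 F2 : R -> R) (s k a p q : R) (t : R) :=
  (Z1 t * cos ((t-a)/s) + Z t * sin ((t-a)/s) * /s + F2 t * sin ((t-a)/s) * s * /k) * p
  + (Z t * cos ((t-a)/s) * /s - Z1 t * sin ((t-a)/s) + F2 t * cos ((t-a)/s) * s * /k) * q.

Lemma key_deriv (Z Z1 F2 F3 : R -> R) (s k a c z1' p q : R) : s <> 0 -> k <> 0 ->
  derivable_pt_lim Z c (Z1 c) -> derivable_pt_lim Z1 c z1' ->
  derivable_pt_lim F2 c (F3 c) -> z1' + Z c / (s*s) = - F2 c / k ->
  derivable_pt_lim (RR Z Z1 F2 s k a p q) c
    (F3 c * (sin ((c-a)/s) * p + cos ((c-a)/s) * q) * s / k).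
Proof.
  intros Hs Hk HZ HZ1 HF2 Hode.
  apply is_derive_Reals. unfold RR.
  apply is_derive_Reals in HZ. apply is_derive_Reals in HZ1. apply is_derive_Reals in HF2.
  auto_derive.
  - repeat split; eexists; eassumption.
  - assert (E1 : Derive (fun x : R => Z x) c = Z1 c) by (apply is_derive_unique; exact HZ).
    assert (E2 : Derive (fun x : R => Z1 x) c = z1') by (apply is_derive_unique; exact HZ1).
    assert (E3 : Derive (fun x : R => F2 x) c = F3 c) by (apply is_derive_unique; exact HF2).
    rewrite E1, E2, E3.
    replace (c + - a) with (c - a) by ring.
    replace z1' with (- F2 c / k - Z c / (s*s)) by lra.
    unfold Rdiv. generalize (sin ((c - a) * / s)) (cos ((c - a) * / s)); intros S C.
    field. auto.
Qed.

Lemma cont_lim (g : R -> R) D c : continuity_pt g c -> limit1_in g D (g c) c.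
Proof.
  intros H eps He. destruct (H eps He) as [alp [Ha Hl]]. exists alp; split; auto.
  intros x [Dx Hx]. destruct (Req_dec c x) as [<-|Hne].
  - simpl. unfold R_dist. replace (g c - g c) with 0 by ring. rewrite Rabs_R0. lra.
  - apply Hl. split; auto. split; auto. exact I.
Qed.



Lemma sin_lim s a D c : limit1_in (fun t => sin ((t-a)/s)) D (sin ((c-a)/s)) c.
Proof.
  apply (cont_lim (fun t => sin ((t-a)/s))).
  assert (H : ex_derive (fun t => sin ((t-a)/s)) c) by (auto_derive; auto).
  destruct H as [l Hl]. apply derivable_continuous_pt. exists l. apply is_derive_Reals; exact Hl.
Qed.
Lemma cos_lim s a D c : limit1_in (fun t => cos ((t-a)/s)) D (cos ((c-a)/s)) c.
Proof.
  apply (cont_lim (fun t => cos ((t-a)/s))).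
  assert (H : ex_derive (fun t => cos ((t-a)/s)) c) by (auto_derive; auto).
  destruct H as [l Hl]. apply derivable_continuous_pt. exists l. apply is_derive_Reals; exact Hl.
Qed.
Lemma const_lim r D c : limit1_in (fun _ => r) D r c.
Proof. intros eps He. exists 1. split; [lra|]. intros. simpl. unfold R_dist.
  replace (r - r) with 0 by ring. rewrite Rabs_R0. lra. Qed.

Lemma RR_cont Z Z1 F2 s k a p q D c :
  limit1_in Z D (Z c) c -> limit1_in Z1 D (Z1 c) c -> limit1_in F2 D (F2 c) c ->
  limit1_in (RR Z Z1 F2 s k a p q) D (RR Z Z1 F2 s k a p q c) c.
Proof.
  intros HZ HZ1 HF. unfold RR.
  repeat first [ apply limit_plus | apply limit_minus | apply limit_mul
               | apply const_lim | apply sin_lim | apply cos_lim | apply limit_Ropp | assumption ].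
Qed.

Lemma RR_diag Z Z1 F2 s k a t : s <> 0 -> k <> 0 ->
  RR Z Z1 F2 s k a (sin ((t-a)/s)) (cos ((t-a)/s)) t = Z t / s + F2 t * s / k.
Proof.
  intros. unfold RR. pose proof (sin2_cos2 ((t-a)/s)). unfold Rsqr in *.
  generalize dependent (sin ((t-a)/s)); generalize (cos ((t-a)/s)). intros C S HH.
  transitivity ((Z t/s + F2 t*s/k)*(S*S+C*C)). unfold Rdiv; ring. rewrite HH; ring.
Qed.

Lemma RR_a Z Z1 F2 s k a p q : s <> 0 ->
  RR Z Z1 F2 s k a p q a = Z1 a * p + (Z a / s + F2 a * s / k) * q.
Proof.
  intros. unfold RR. replace ((a-a)/s) with 0 by (field; auto).
  rewrite sin_0, cos_0. unfold Rdiv. ring.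
Qed.

Lemma RR_b Z Z1 F2 s k a t : s <> 0 -> k <> 0 ->
  RR Z Z1 F2 s k a (cos ((t-a)/s)) (- sin ((t-a)/s)) t = Z1 t.
Proof.
  intros. unfold RR. pose proof (sin2_cos2 ((t-a)/s)). unfold Rsqr in *.
  generalize dependent (sin ((t-a)/s)); generalize (cos ((t-a)/s)). intros C S HH.
  transitivity (Z1 t * (S*S+C*C)). unfold Rdiv; ring. rewrite HH; ring.
Qed.

Lemma sin_shift n x : Rabs (sin (x + INR n * PI)) = Rabs (sin x).
Proof.
  induction n. simpl. rewrite Rmult_0_l, Rplus_0_r. auto.
  rewrite S_INR. replace (x + (INR n + 1) * PI) with ((x + INR n * PI) + PI) by ring.
  rewrite neg_sin, Rabs_Ropp. auto.
Qed.

Lemma sin_lb u lam : 0 < lam <= PI/2 -> lam <= u <= PI - lam -> sin lam <= sin u.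
Proof.
  intros H1 H2. pose proof PI_RGT_0.
  destruct (Rle_dec u (PI/2)).
  - apply sin_incr_1; lra.
  - rewrite <- (sin_PI_x u). apply sin_incr_1; lra.
Qed.

Lemma sin_J n x lam : 0 < lam <= PI/2 -> INR n * PI + lam <= x <= (INR n + 1) * PI - lam ->
  sin lam <= Rabs (sin x).
Proof.
  intros H1 H2.
  replace x with ((x - INR n * PI) + INR n * PI) by ring. rewrite sin_shift.
  assert (sin lam <= sin (x - INR n * PI)) by (apply sin_lb; lra).
  assert (0 < sin lam) by (apply sin_gt_0; pose proof PI_RGT_0; lra).
  rewrite Rabs_right; lra.
Qed.

Lemma lip' a b t M F F' : a <= t -> t <= b ->
 (forall c, a < c < t -> derivable_pt_lim F c (F' c)) ->
 (forall c, a <= c <= b -> limit1_in F (fun x => a <= x <= b) (F c) c) ->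
 (forall c, a < c < t -> Rabs (F' c) <= M) -> 0 <= M ->
 Rabs (F t - F a) <= M * (t - a).
Proof.
  intros Hat Htb HD HC HM HM0. destruct (Req_dec a t) as [<-|Hne].
  - replace (F a - F a) with 0 by ring. rewrite Rabs_R0. lra.
  - apply (lip a b t M F F'); auto. lra.
Qed.

Lemma dminus (g1 g2 : R -> R) k c l1 l2 : k <> 0 ->
  derivable_pt_lim g1 c l1 -> derivable_pt_lim g2 c l2 ->
  derivable_pt_lim (fun t => g1 t - g2 t / k) c (l1 - l2 / k).
Proof.
  intros Hk H1 H2. apply is_derive_Reals. apply is_derive_Reals in H1. apply is_derive_Reals in H2.
  auto_derive.
  - repeat split; eexists; eassumption.
  - assert (E1 : Derive (fun x : R => g1 x) c = l1) by (apply is_derive_unique; exact H1).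
    assert (E2 : Derive (fun x : R => g2 x) c = l2) by (apply is_derive_unique; exact H2).
    rewrite E1, E2. field. auto.
Qed.

Lemma lminus (g1 g2 : R -> R) k D c :
  limit1_in g1 D (g1 c) c -> limit1_in g2 D (g2 c) c ->
  limit1_in (fun t => g1 t - g2 t / k) D (g1 c - g2 c / k) c.
Proof.
  intros. unfold Rdiv. apply limit_minus; auto. apply limit_mul; auto. apply const_lim.
Qed.

Lemma absdiv u k : 0 < k -> Rabs (u / k) = Rabs u / k.
Proof. intros. unfold Rdiv. rewrite Rabs_mult, Rabs_inv, (Rabs_right k) by lra. auto. Qed.

Lemma absmul1 x c : Rabs c <= 1 -> Rabs (x * c) <= Rabs x.
Proof. intros. rewrite Rabs_mult. pose proof (Rabs_pos x). pose proof (Rabs_pos c). nra. Qed.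

Theorem mainTheorem3
  (a b k lam : R) (f f1 f2 f3 : R -> R) (mu1 mu2 eps : R) (n : nat)
  (y y1 y2 : R -> R) (t0 : R) :
  a < b -> 0 < k -> 0 < lam <= PI / 2 ->
  (* f in C^3([a,b]) with derivatives f1, f2, f3 *)
  deriv_on a b f f1 -> deriv_on a b f1 f2 -> deriv_on a b f2 f3 ->
  cont_on a b f3 ->
  is_lub (fun r => exists t, a <= t <= b /\ r = Rabs (f2 t)) mu1 ->
  is_lub (fun r => exists t, a <= t <= b /\ r = Rabs (f3 t)) mu2 ->
  J k a b lam n eps ->
  (* y is the solution of eps y'' + k y = f on [a,b], y'(a) = y'(b) = 0 *)
  deriv_on a b y y1 -> deriv_on a b y1 y2 ->
  (forall t, a <= t <= b -> eps * y2 t + k * y t = f t) ->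
  y1 a = 0 -> y1 b = 0 ->
  a <= t0 <= b ->
  Rabs (y t0 - f t0 / k) <=
    1 / (k * sin lam) * sqrt (eps / k) *
      (Rabs (f1 a) + Rabs (f1 b) + sqrt (eps / k) * (Rabs (f2 a) + mu2 * (b - a)))
    + 1 / k * sqrt (eps / k) *
      (Rabs (f1 a) + sqrt (eps / k) * (mu1 + Rabs (f2 a) + mu2 * (b - a))).
Proof.
  intros Hab Hk Hlam Hf Hf1 Hf2 Hf3c Hmu1 Hmu2 HJ Hy Hy1 Hode Hya Hyb Ht0.
  pose proof PI_RGT_0 as HPI. pose proof (pos_INR n) as Hn.
  set (d := INR n * PI + lam). set (d' := (INR n + 1) * PI - lam).
  assert (Hd : 0 < d) by (unfold d; nra).
  assert (Hd' : 0 < d') by (unfold d'; nra).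
  destruct HJ as [HJ1 HJ2]. fold d d' in HJ1, HJ2.
  assert (HL : 0 < b - a) by lra.
  assert (Heps : 0 < eps).
  { eapply Rlt_le_trans; [|exact HJ1]. apply Rmult_lt_0_compat; auto.
    apply pow_lt. apply Rdiv_lt_0_compat; auto. }
  set (s := sqrt (eps / k)).
  assert (Hs : 0 < s) by (apply sqrt_lt_R0; apply Rdiv_lt_0_compat; auto).
  assert (Hss : s * s = eps / k) by (apply sqrt_sqrt; apply Rlt_le, Rdiv_lt_0_compat; auto).
  assert (Heps' : eps = k * (s * s)) by (rewrite Hss; field; lra).
  assert (Hsd : s * d <= b - a).
  { assert (s * s * (d * d) <= (b-a) * (b-a)).
    { rewrite Heps' in HJ2. 
      assert (s * s <= ((b - a) / d) ^ 2) by nra.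
      replace ((b-a)*(b-a)) with (((b - a) / d) ^ 2 * (d*d)) by (field; lra).
      nra. }
    nra. }
  assert (Hsd' : b - a <= s * d').
  { assert ((b-a) * (b-a) <= s * s * (d' * d')).
    { rewrite Heps' in HJ1.
      assert (((b - a) / d') ^ 2 <= s * s) by nra.
      replace ((b-a)*(b-a)) with (((b - a) / d') ^ 2 * (d'*d')) by (field; lra).
      nra. }
    apply Rnot_lt_le; intro HH. assert (0 < s*d') by nra.
    assert (s * d' * (s * d') < (b-a) * (b-a)) by (apply Rmult_le_0_lt_compat; lra). nra. }
  assert (Hsb : sin lam <= Rabs (sin ((b - a) / s))).
  { apply (sin_J n); auto. fold d. split.
    - apply (Rmult_le_reg_l s); auto. replace (s * ((b-a)/s)) with (b-a) by (field; lra). lra.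
    - apply (Rmult_le_reg_l s); auto. replace (s * ((b-a)/s)) with (b-a) by (field; lra).
      unfold d' in Hsd'. lra. }
  assert (Hsl : 0 < sin lam) by (apply sin_gt_0; lra).
  set (Z := fun t => y t - f t / k).
  set (Z1 := fun t => y1 t - f1 t / k).
  assert (Hkn : k <> 0) by lra. assert (Hsn : s <> 0) by lra.
  assert (dZ : forall c, a < c < b -> derivable_pt_lim Z c (Z1 c)).
  { intros c Hc. apply dminus; auto; eapply deriv_interior; eauto. }
  assert (dZ1 : forall c, a < c < b -> derivable_pt_lim Z1 c (y2 c - f2 c / k)).
  { intros c Hc. apply dminus; auto; eapply deriv_interior; eauto. }
  assert (dF2 : forall c, a < c < b -> derivable_pt_lim f2 c (f3 c)).
  { intros c Hc. eapply deriv_interior; eauto. }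
  assert (ode : forall c, a < c < b -> (y2 c - f2 c / k) + Z c / (s * s) = - f2 c / k).
  { intros c Hc. specialize (Hode c ltac:(lra)). unfold Z. rewrite Heps' in Hode.
    assert (y2 c = (f c - k * y c) / (k * (s * s))) by (rewrite <- Hode; field; auto).
    rewrite H. field. auto. }
  assert (cZ : forall c, a <= c <= b -> limit1_in Z (fun x => a <= x <= b) (Z c) c).
  { intros c Hc. apply lminus; eapply deriv_cont; eauto. }
  assert (cZ1 : forall c, a <= c <= b -> limit1_in Z1 (fun x => a <= x <= b) (Z1 c) c).
  { intros c Hc. apply lminus; eapply deriv_cont; eauto. }
  assert (cF2 : forall c, a <= c <= b -> limit1_in f2 (fun x => a <= x <= b) (f2 c) c).
  { intros c Hc. eapply deriv_cont; eauto. }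
  assert (Hf3b : forall c, a <= c <= b -> Rabs (f3 c) <= mu2).
  { intros c Hc. apply (proj1 Hmu2). exists c; auto. }
  assert (Hf2b : forall c, a <= c <= b -> Rabs (f2 c) <= mu1).
  { intros c Hc. apply (proj1 Hmu1). exists c; auto. }
  assert (Hmu2p : 0 <= mu2) by (pose proof (Hf3b a ltac:(lra)); pose proof (Rabs_pos (f3 a)); lra).
  assert (HM : 0 <= mu2 * s / k) by (apply Rmult_le_pos; [apply Rmult_le_pos|apply Rlt_le, Rinv_0_lt_compat]; lra).
  set (th0 := (t0 - a) / s).
  assert (E1 : Rabs (RR Z Z1 f2 s k a (sin th0) (cos th0) t0 - RR Z Z1 f2 s k a (sin th0) (cos th0) a)
               <= mu2 * s / k * (t0 - a)).
  { apply (lip' a b t0 _ _ (fun c => f3 c * (sin ((c-a)/s) * sin th0 + cos ((c-a)/s) * cos th0) * s / k)); try lra.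
    - intros c Hc. apply (key_deriv Z Z1 f2 f3 s k a c (y2 c - f2 c / k)); auto; first [apply dZ|apply dZ1|apply dF2|apply ode]; lra.
    - intros c Hc. apply RR_cont; auto.
    - intros c Hc.
      replace (sin ((c - a) / s) * sin th0 + cos ((c - a) / s) * cos th0) with (cos ((c-a)/s - th0)) by (rewrite cos_minus; ring).
      unfold Rdiv. rewrite Rmult_assoc, (Rmult_comm (f3 c)), Rmult_assoc.
      rewrite Rabs_mult. 
      assert (Rabs (cos ((c - a) * / s - th0)) <= 1) by (apply Rabs_le; apply COS_bound).
      rewrite Rabs_mult, Rabs_mult, (Rabs_right s), (Rabs_right (/k)) by (apply Rle_ge, Rlt_le; try apply Rinv_0_lt_compat; lra).
      pose proof (Hf3b c ltac:(lra)). pose proof (Rabs_pos (f3 c)). pose proof (Rabs_pos (cos ((c - a) * / s - th0))).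
      assert (0 < / k) by (apply Rinv_0_lt_compat; lra).
      assert (Rabs (cos ((c - a) * / s - th0)) * (Rabs (f3 c) * (s * / k)) <= 1 * (mu2 * (s * /k))).
      { apply Rmult_le_compat; [lra | apply Rmult_le_pos; [lra| apply Rmult_le_pos; lra] | lra | apply Rmult_le_compat_r; [apply Rmult_le_pos; lra | lra]]. }
      lra. }
  unfold th0 in E1. rewrite (RR_diag Z Z1 f2 s k a t0 Hsn Hkn) in E1. fold th0 in E1.
  rewrite (RR_a Z Z1 f2 s k a _ _ Hsn) in E1.
  set (thb := (b - a) / s).
  assert (E2 : Rabs (RR Z Z1 f2 s k a (cos thb) (- sin thb) b - RR Z Z1 f2 s k a (cos thb) (- sin thb) a)
               <= mu2 * s / k * (b - a)).
  { apply (lip' a b b _ _ (fun c => f3 c * (sin ((c-a)/s) * cos thb + cos ((c-a)/s) * - sin thb) * s / k)); try lra.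
    - intros c Hc. apply (key_deriv Z Z1 f2 f3 s k a c (y2 c - f2 c / k)); auto; first [apply dZ|apply dZ1|apply dF2|apply ode]; lra.
    - intros c Hc. apply RR_cont; auto.
    - intros c Hc. 
      replace (sin ((c - a) / s) * cos thb + cos ((c - a) / s) * - sin thb) with (sin ((c-a)/s - thb)) by (rewrite sin_minus; ring).
      unfold Rdiv. rewrite Rmult_assoc, (Rmult_comm (f3 c)), Rmult_assoc.
      rewrite Rabs_mult. 
      assert (Rabs (sin ((c - a) * / s - thb)) <= 1) by (apply Rabs_le; apply SIN_bound).
      rewrite Rabs_mult, Rabs_mult, (Rabs_right s), (Rabs_right (/k)) by (apply Rle_ge, Rlt_le; try apply Rinv_0_lt_compat; lra).
      pose proof (Hf3b c ltac:(lra)). pose proof (Rabs_pos (f3 c)). pose proof (Rabs_pos (sin ((c - a) * / s - thb))).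
      assert (0 < / k) by (apply Rinv_0_lt_compat; lra).
      assert (Rabs (sin ((c - a) * / s - thb)) * (Rabs (f3 c) * (s * / k)) <= 1 * (mu2 * (s * /k))).
      { apply Rmult_le_compat; [lra | apply Rmult_le_pos; [lra| apply Rmult_le_pos; lra] | lra | apply Rmult_le_compat_r; [apply Rmult_le_pos; lra | lra]]. }
      lra. }
  unfold thb in E2. rewrite (RR_b Z Z1 f2 s k a b Hsn Hkn) in E2. fold thb in E2.
  rewrite (RR_a Z Z1 f2 s k a _ _ Hsn) in E2.
  assert (HZ1a : Z1 a = - f1 a / k) by (unfold Z1; rewrite Hya; field; auto).
  assert (HZ1b : Z1 b = - f1 b / k) by (unfold Z1; rewrite Hyb; field; auto).
  rewrite HZ1a in E1, E2. rewrite HZ1b in E2.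
  change (y t0 - f t0 / k) with (Z t0).
  set (X := Z a / s) in *.
  set (V := Z t0 / s + f2 t0 * s / k - (- f1 a / k * sin th0 + (X + f2 a * s / k) * cos th0)) in E1.
  set (W := - f1 b / k - (- f1 a / k * cos thb + (X + f2 a * s / k) * - sin thb)) in E2.
  assert (Hkinv : 0 < / k) by (apply Rinv_0_lt_compat; lra).
  assert (Bs : Rabs (sin th0) <= 1) by (apply Rabs_le; apply SIN_bound).
  assert (Bc : Rabs (cos th0) <= 1) by (apply Rabs_le; apply COS_bound).
  assert (Bsb : Rabs (sin thb) <= 1) by (apply Rabs_le; apply SIN_bound).
  assert (Bcb : Rabs (cos thb) <= 1) by (apply Rabs_le; apply COS_bound).
  assert (Ab1 : Rabs (f1 b / k) = Rabs (f1 b) / k) by (apply absdiv; lra).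
  assert (Aa1 : Rabs (f1 a / k) = Rabs (f1 a) / k) by (apply absdiv; lra).
  assert (Aa2 : Rabs (f2 a * s / k) = Rabs (f2 a) * s / k).
  { rewrite absdiv, Rabs_mult, (Rabs_right s); lra. }
  assert (At2 : Rabs (f2 t0 * s / k) = Rabs (f2 t0) * s / k).
  { rewrite absdiv, Rabs_mult, (Rabs_right s); lra. }
  assert (HXa : Rabs X * sin lam <= Rabs W + Rabs (f1 b) / k + Rabs (f1 a) / k + Rabs (f2 a) * s / k).
  { assert (Rabs X * sin lam <= Rabs (X * sin thb)).
    { rewrite Rabs_mult. apply Rmult_le_compat_l; auto. apply Rabs_pos. }
    replace (X * sin thb) with (W + f1 b / k + - (f1 a / k * cos thb) + - (f2 a * s / k * sin thb)) in H
      by (unfold W, Rdiv; ring).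
    pose proof (Rabs_triang (W + f1 b / k + - (f1 a / k * cos thb)) (- (f2 a * s / k * sin thb))).
    pose proof (Rabs_triang (W + f1 b / k) (- (f1 a / k * cos thb))).
    pose proof (Rabs_triang W (f1 b / k)).
    rewrite Rabs_Ropp in *.
    pose proof (absmul1 (f1 a / k) (cos thb) Bcb).
    pose proof (absmul1 (f2 a * s / k) (sin thb) Bsb).
    lra. }
  set (Q := Rabs (f1 a) + Rabs (f1 b) + s * (Rabs (f2 a) + mu2 * (b - a))).
  assert (HX : Rabs X <= Q / (k * sin lam)).
  { apply (Rmult_le_reg_r (sin lam)); auto.
    replace (Q / (k * sin lam) * sin lam) with (Q / k) by (field; lra).
    unfold Q. 
    assert (Rabs (f1 a) / k + Rabs (f1 b) / k + Rabs (f2 a) * s / k + mu2 * s / k * (b - a)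
            = (Rabs (f1 a) + Rabs (f1 b) + s * (Rabs (f2 a) + mu2 * (b - a))) / k) by (field; lra).
    lra. }
  assert (HZt : Rabs (Z t0 / s) <= Rabs V + Rabs (f2 t0) * s / k + Rabs (f1 a) / k + Rabs X + Rabs (f2 a) * s / k).
  { replace (Z t0 / s) with (V + - (f2 t0 * s / k) + - (f1 a / k * sin th0) + X * cos th0 + f2 a * s / k * cos th0)
      by (unfold V, Rdiv; ring).
    pose proof (Rabs_triang (V + - (f2 t0 * s / k) + - (f1 a / k * sin th0) + X * cos th0) (f2 a * s / k * cos th0)).
    pose proof (Rabs_triang (V + - (f2 t0 * s / k) + - (f1 a / k * sin th0)) (X * cos th0)).
    pose proof (Rabs_triang (V + - (f2 t0 * s / k)) (- (f1 a / k * sin th0))).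
    pose proof (Rabs_triang V (- (f2 t0 * s / k))).
    repeat rewrite Rabs_Ropp in *.
    pose proof (absmul1 (f1 a / k) (sin th0) Bs).
    pose proof (absmul1 X (cos th0) Bc).
    pose proof (absmul1 (f2 a * s / k) (cos th0) Bc).
    lra. }
  assert (Ht2 : Rabs (f2 t0) <= mu1) by (apply Hf2b; lra).
  assert (HV : Rabs V <= mu2 * s / k * (b - a)).
  { assert (mu2 * s / k * (t0 - a) <= mu2 * s / k * (b - a)) by (apply Rmult_le_compat_l; lra). lra. }
  assert (Habs : Rabs (Z t0) = s * Rabs (Z t0 / s)).
  { rewrite absdiv by lra. field. lra. }
  rewrite Habs. fold Q.
  assert (Hfin : Rabs (Z t0 / s) <= Q / (k * sin lam) + 1 / k * (Rabs (f1 a) + s * (mu1 + Rabs (f2 a) + mu2 * (b - a)))).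
  { assert (Rabs (f2 t0) * s / k <= mu1 * s / k).
    { unfold Rdiv. apply Rmult_le_compat_r; [lra|]. apply Rmult_le_compat_r; lra. }
    assert (1 / k * (Rabs (f1 a) + s * (mu1 + Rabs (f2 a) + mu2 * (b - a)))
      = mu2 * s / k * (b - a) + mu1 * s / k + Rabs (f1 a) / k + Rabs (f2 a) * s / k) by (field; lra).
    lra. }
  replace (1 / (k * sin lam) * s * Q + 1 / k * s * (Rabs (f1 a) + s * (mu1 + Rabs (f2 a) + mu2 * (b - a))))
    with (s * (Q / (k * sin lam) + 1 / k * (Rabs (f1 a) + s * (mu1 + Rabs (f2 a) + mu2 * (b - a)))))
    by (field; lra).
  apply Rmult_le_compat_l; lra.
Qed.
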